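(* Let $X$ be a compact metric space and $(f_n)_{n\ge1}$ a sequence of continuous maps $X\to X$. Then for every integer $k\ge2$, the space $E(X,f_{1,\infty})^*$ is a continuous image of the space $E(X,f_{k,\infty})^*$ (both as subspaces of $X^X$ with the pointwise topology).
   Context: $\mathbb{N}=\{1,2,3,\dots\}$, $\mathbb{N}^*$ is the set of free ultrafilters on $\mathbb{N}$; for $p\in\mathbb{N}^*$, $p\text{-}\lim_n x_n$ is the unique $y$ with $\{n:x_n\in V\}\in p$ for every neighbourhood $V$ of $y$. Put $f_1^n=f_n\circ\cdots\circ f_1$ and $f_1^p(x)=p\text{-}\lim_n f_1^n(x)$ for $p\in\mathbb{N}^*$; $E(X,f_{1,\infty})^*=\{f_1^p:p\in\mathbb{N}^*\}$. For $k\ge2$, let $f_k^i=f_{k+i}\circ\cdots\circ f_k$ ($i\in\mathbb{N}$), $f_k^p(x)=p\text{-}\lim_i f_k^i(x)$ for $p\in\mathbb{N}^*$, and $E(X,f_{k,\infty})^*=\{f_k^p:p\in\mathbb{N}^*\}$. *)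

(* Defs.v *)
From HB Require Import structures.
From mathcomp Require Import all_boot all_order all_algebra.
From mathcomp Require Import all_classical all_reals all_analysis.
Set Implicit Arguments. Unset Strict Implicit. Unset Printing Implicit Defensive.
Import Order.TTheory GRing.Theory Num.Theory.
Local Open Scope classical_set_scope.

(* The sequence of maps is f : nat -> X -> X, with f n playing the role of f_n
   (n >= 1); the value f 0 is never used. *)

(* f_1^n = f_n \o ... \o f_1   (f_1^0 = id, never relevant for free ultrafilters) *)
Fixpoint f1n (X : Type) (f : nat -> X -> X) (n : nat) : X -> X :=
  match n with
  | 0 => id
  | m.+1 => f m.+1 \o f1n f m
  end.

(* f_k^i = f_{k+i} \o ... \o f_k   (i = 0 gives f_k, never relevant) *)
Fixpoint fki (X : Type) (f : nat -> X -> X) (k i : nat) : X -> X :=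
  match i with
  | 0 => f k
  | j.+1 => f (k + j.+1)%N \o fki f k j
  end.

Definition free_ultrafilter (p : set_system nat) : Prop :=
  UltraFilter p /\ (forall A : set nat, finite_set A -> ~ p A).

Definition Estar (X : topologicalType) (s : nat -> X -> X) : set {ptws X -> X} :=
  [set g | exists p : set_system nat, free_ultrafilter p /\
     forall x : X, (fun n => s n x) @ p --> g x].

(* Main.v *)
Require Import Defs.
From HB Require Import structures.
From mathcomp Require Import all_boot all_order all_algebra.
From mathcomp Require Import all_classical all_reals all_analysis.
Import Order.TTheory GRing.Theory Num.Theory.
Local Open Scope classical_set_scope.

Lemma ultra_fmap (T U : Type) (g : T -> U) (F : set_system T) :
  UltraFilter F -> UltraFilter (g @ F).
Proof.
move=> FU; split; first exact: fmap_proper_filter.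
move=> G PG sub; apply/seteqP; split; last exact: sub.
move=> A GA; case: (in_ultra_setVsetC (g @^-1` A) FU) => // FnA.
have GnA : G (~` A) by apply: sub; rewrite /= /fmap /= preimage_setC.
by have /filter_ex [? []] : G (A `&` (~` A)) by exact: filterI.
Qed.

Lemma key_eq (X : Type) (f : nat -> X -> X) (k : nat) : (0 < k)%N ->
  forall i x, f1n f (i + k) x = fki f k i (f1n f k.-1 x).
Proof.
move=> k0; elim=> [|i IH] x.
  rewrite add0n; move: k0; case: k => [//|k' _] /=; done.
by rewrite addSn /= IH addnS addnC.
Qed.

Theorem theorem2p6 (R : realType) (X : metricType R) (f : nat -> X -> X) :
  compact [set: X] ->
  (forall n : nat, (1 <= n)%N -> continuous (f n)) ->
  forall k : nat, (2 <= k)%N ->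
  exists h : {ptws X -> X} -> {ptws X -> X},
    {within Estar (fki f k), continuous h} /\
    h @` Estar (fki f k) = Estar (f1n f).
Proof.
move=> cpt _ k k2.
have k0 : (0 < k)%N by apply: leq_trans k2.
pose phi := f1n f k.-1.
pose h := (fun g : {ptws X -> X} => (fun x => g (phi x)) : {ptws X -> X}).
exists h.
split.
  apply: continuous_subspaceT => g.
  apply/(@pointwise_cvgP X X (h @ nbhs g) (h g) _) => t.
  have := (@pointwise_cvgP X X (nbhs g) g _).1 (@cvg_id _ (nbhs g)).
  by move=> /(_ _ (phi t)).
apply/seteqP; split.
  move=> _ [g [p [[pU pfree] pcv]] <-].
  exists ((fun n => n + k)%N @ p); split.
    split; first exact: ultra_fmap.
    move=> A finA; apply: pfree.
    apply: (sub_finite_set _ (finite_image (fun a => a - k)%N finA)).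
    by move=> n /= An; exists (n + k)%N => //; rewrite addnK.
  move=> x.
  change ((fun n => f1n f (n + k) x) @ p --> g (phi x)).
  by rewrite (eq_cvg _ _ (@key_eq _ f k k0 ^~ x)); exact: pcv.
move=> g' [q [[qU qfree] qcv]].
pose p := (fun m => m - k)%N @ q.
have pU : UltraFilter p by exact: ultra_fmap.
have pfree : forall A : set nat, finite_set A -> ~ p A.
  move=> A finA; apply: qfree.
  have : finite_set (((fun a => a + k)%N @` A) `|` `I_k).
    by rewrite finite_setU; split; [exact: finite_image|exact: finite_II].
  apply: sub_finite_set => m /= Am.
  case: (ltnP m k) => mk; first by right.
  by left; exists (m - k)%N => //; rewrite subnK.
have : forall x : X, exists l : X, (fun n => fki f k n x) @ p --> l.
  move=> x; move: cpt; rewrite compact_ultra => /(_ ((fun n => fki f k n x) @ p)) H.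
  have [l [_ ?]] := H (@ultra_fmap _ _ _ _ pU) filterT.
  by exists l.
case/choice => g gcv.
exists g; first by exists p.
apply/funext => x /=.
have qk : q (~` `I_k).
  case: (in_ultra_setVsetC `I_k qU) => // qI.
  by exfalso; apply: (qfree _ (finite_II k)).
apply: (cvg_unique (@metric_hausdorff _ X) _ (qcv x)).
apply: (cvg_trans _ (gcv (phi x))).
apply: near_eq_cvg.
apply: filterS qk => m /= /negP; rewrite -leqNgt => km.
by rewrite -[in RHS](subnK km) key_eq.
Qed.
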